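(* Consider a sequence of total systems indexed by the size $N$ (the system S is fixed and the bath grows). For each $N$, the total Hamiltonian $H=H^{(N)}$ on the finite-dimensional space $\mathcal{H}_{\mathrm{S}}\otimes\mathcal{H}_{\mathrm{B}}^{(N)}$ has non-degenerate spectrum with eigenpairs $(E_j,|E_j\rangle)$, and the initial state is a product $\rho(0)=\rho_{\mathrm{S}}(0)\otimes\rho_{\mathrm{B}}(0)$ (depending on $N$). Fix an energy density $u$ and widths $\Delta=\Delta_N>0$ with $\Delta_N=\mathcal{O}(N^\alpha)$, $0\le\alpha<1$; let $M_{uN,\Delta}:=\{j:|E_j-uN|\le\Delta\}$ (assumed nonempty), $D^{\mathrm{mc}}:=|M_{uN,\Delta}|$, and $\rho^{\mathrm{mc}}:=\frac{1}{D^{\mathrm{mc}}}\sum_{j\in M_{uN,\Delta}}|E_j\rangle\langle E_j|$. Assume: (i) with $P_{\mathrm{out}}:=\sum_{j\notin M_{uN,\Delta}}|E_j\rangle\langle E_j|$, for every $\epsilon>0$, $\mathrm{Tr}[P_{\mathrm{out}}\rho(0)]<\epsilon$ for all sufficiently large $N$; (ii) (weak ETH) for every $\epsilon>0$ there is a constant $\gamma_\epsilon>0$ such that for every $N$, $\frac{1}{D^{\mathrm{mc}}}\bigl|\{j\in M_{uN,\Delta}:\mathcal{D}_{\mathrm{S}}(|E_j\rangle\langle E_j|,\rho^{\mathrm{mc}})>\epsilon\}\bigr|<e^{-\gamma_\epsilon N}$; (iii) (large effective dimension) for every $\epsilon,\tilde\epsilon>0$, $D_{\mathrm{eff}}>D^{\mathrm{mc}}e^{-\gamma_\epsilon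 N}/\tilde\epsilon$ for all sufficiently large $N$, with $\gamma_\epsilon$ as in (ii). Then for every $\epsilon>0$, $\mathcal{D}_{\mathrm{S}}(\omega,\rho^{\mathrm{mc}})<\epsilon$ for all sufficiently large $N$, where $\omega$ is the diagonal ensemble of $\rho(0)$.
   Context: The diagonal ensemble of $\rho(0)$ is $\omega:=\lim_{\tau\to\infty}\frac1\tau\int_0^\tau e^{-iHt}\rho(0)e^{iHt}\,dt=\sum_j|E_j\rangle\langle E_j|\rho(0)|E_j\rangle\langle E_j|$ (non-degenerate $H$). The effective dimension is $D_{\mathrm{eff}}:=1/\sum_j\langle E_j|\rho(0)|E_j\rangle^2$. For density operators $\rho,\tau$ on $\mathcal{H}_{\mathrm{S}}\otimes\mathcal{H}_{\mathrm{B}}$, the local trace distance is $\mathcal{D}_{\mathrm{S}}(\rho,\tau):=\frac12\mathrm{Tr}\bigl|\mathrm{Tr}_{\mathrm{B}}\rho-\mathrm{Tr}_{\mathrm{B}}\tau\bigr|$. *)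

(* Defs.v *)
From mathcomp Require Import all_boot all_order all_algebra.
From mathcomp Require Import all_classical all_reals all_analysis.
From mathcomp Require Import complex mxtens.
Set Implicit Arguments.
Unset Strict Implicit.
Unset Printing Implicit Defensive.
Import Order.TTheory GRing.Theory Num.Theory.
Local Open Scope ring_scope.
Local Open Scope complex_scope.

Definition q_adj (R : realType) m n (A : 'M[R[i]]_(m, n)) : 'M[R[i]]_(n, m) :=
  \matrix_(i, j) conjc (A j i).

Definition q_ketbra (R : realType) n (v w : 'cV[R[i]]_n) : 'M[R[i]]_n :=
  v *m q_adj w.

Definition q_braket (R : realType) n (v : 'cV[R[i]]_n) (A : 'M[R[i]]_n)
  (w : 'cV[R[i]]_n) : R[i] := (q_adj v *m A *m w) 0 0.

Definition q_hermitian (R : realType) n (A : 'M[R[i]]_n) : Prop := q_adj A = A.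

Definition q_unitary (R : realType) n (U : 'M[R[i]]_n) : Prop := q_adj U *m U = 1%:M.

(* positive semidefinite: <x|A|x> >= 0 (in the complex order, i.e. real and
   nonnegative) for all x *)
Definition q_psd (R : realType) n (A : 'M[R[i]]_n) : Prop :=
  forall x : 'cV[R[i]]_n, 0 <= q_braket x A x.

Definition q_density (R : realType) n (rho : 'M[R[i]]_n) : Prop :=
  q_psd rho /\ \tr rho = 1.

(* The family (v j)_j is an orthonormal basis: <v j|v k> = delta_jk
   (n orthonormal vectors in an n-dimensional space form a basis). *)
Definition q_orthonormal_basis (R : realType) n (v : 'I_n -> 'cV[R[i]]_n) : Prop :=
  forall j k, q_braket (v j) 1%:M (v k) = (j == k)%:R.

Definition q_singular_values (R : realType) n (A : 'M[R[i]]_n) (s : 'I_n -> R) : Prop :=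
  (forall i, 0 <= s i) /\
  exists U V : 'M[R[i]]_n, q_unitary U /\ q_unitary V /\
    A = U *m diag_mx (\row_i (s i)%:C) *m q_adj V.

(* trace norm Tr|A| = Tr sqrt(A^dagger A) = sum of the singular values of A
   (a singular value decomposition always exists in finite dimension; the
   sum does not depend on the chosen decomposition). *)
Definition q_trnorm (R : realType) n (A : 'M[R[i]]_n) : R :=
  match boolp.pselect (exists s, q_singular_values A s) with
  | left h => \sum_i (proj1_sig (boolp.cid h)) i
  | right _ => 0
  end.

(* partial trace over the bath, H_S (dim dS) (x) H_B (dim dB), with the
   index convention of mxtens (same as the Kronecker product A *t B). *)
Definition q_ptrB (R : realType) dS dB (A : 'M[R[i]]_(dS * dB)) : 'M[R[i]]_dS :=
  \matrix_(i, k) \sum_(b < dB) A (mxtens_index (i, b)) (mxtens_index (k, b)).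

Definition q_DS (R : realType) dS dB (rho tau : 'M[R[i]]_(dS * dB)) : R :=
  2^-1 * q_trnorm (q_ptrB rho - q_ptrB tau).

Definition q_diag_ens (R : realType) n (v : 'I_n -> 'cV[R[i]]_n) (rho : 'M[R[i]]_n)
  : 'M[R[i]]_n :=
  \sum_j q_braket (v j) rho (v j) *: q_ketbra (v j) (v j).

(* effective dimension D_eff = 1 / sum_j <E_j|rho|E_j>^2 (these overlaps are
   real, we take their real part) *)
Definition q_Deff (R : realType) n (v : 'I_n -> 'cV[R[i]]_n) (rho : 'M[R[i]]_n) : R :=
  (\sum_j (complex.Re (q_braket (v j) rho (v j))) ^+ 2)^-1.

Definition q_shell (R : realType) n (E : 'I_n -> R) (e Delta : R) : {set 'I_n} :=
  [set j | `|E j - e| <= Delta].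

Definition q_rho_mc (R : realType) n (v : 'I_n -> 'cV[R[i]]_n) (M : {set 'I_n})
  : 'M[R[i]]_n :=
  (#|M|%:R)^-1 *: \sum_(j in M) q_ketbra (v j) (v j).

Definition q_P_out (R : realType) n (v : 'I_n -> 'cV[R[i]]_n) (M : {set 'I_n})
  : 'M[R[i]]_n :=
  \sum_(j in ~: M) q_ketbra (v j) (v j).

(* Main.v *)
Require Import Defs.
From mathcomp Require Import all_boot all_order all_algebra.
From mathcomp Require Import all_classical all_reals all_analysis.
From mathcomp Require Import complex mxtens.
From mathcomp Require Import lra.
From mathcomp Require Import ring.
Import Order.TTheory GRing.Theory Num.Theory.
Local Open Scope ring_scope.
Local Open Scope complex_scope.
Set Implicit Arguments.
Unset Strict Implicit.

Lemma q_adjE (R : realType) m n (A : 'M[R[i]]_(m,n)) i j : q_adj A i j = (A j i)^*.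
Proof. by rewrite mxE. Qed.

Lemma q_adj_mul (R : realType) m n p (A : 'M[R[i]]_(m,n)) (B : 'M[R[i]]_(n,p)) :
  q_adj (A *m B) = q_adj B *m q_adj A.
Proof.
apply/matrixP => i j; rewrite !mxE rmorph_sum; apply: eq_bigr => k _.
by rewrite !mxE rmorphM mulrC.
Qed.

Lemma q_adjK (R : realType) m n (A : 'M[R[i]]_(m,n)) : q_adj (q_adj A) = A.
Proof. by apply/matrixP => i j; rewrite !mxE conjcK. Qed.

Lemma q_adjD (R : realType) m n (A B : 'M[R[i]]_(m,n)) : q_adj (A + B) = q_adj A + q_adj B.
Proof. by apply/matrixP => i j; rewrite !mxE rmorphD. Qed.

Lemma q_adjN (R : realType) m n (A : 'M[R[i]]_(m,n)) : q_adj (- A) = - q_adj A.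
Proof. by apply/matrixP => i j; rewrite !mxE rmorphN. Qed.

Lemma q_adjB (R : realType) m n (A B : 'M[R[i]]_(m,n)) : q_adj (A - B) = q_adj A - q_adj B.
Proof. by rewrite q_adjD q_adjN. Qed.

Lemma q_adjZ (R : realType) m n c (A : 'M[R[i]]_(m,n)) : q_adj (c *: A) = c^* *: q_adj A.
Proof. by apply/matrixP => i j; rewrite !mxE rmorphM. Qed.

Lemma q_adj_sum (R : realType) m n (I : finType) (P : pred I) (F : I -> 'M[R[i]]_(m,n)) :
  q_adj (\sum_(k | P k) F k) = \sum_(k | P k) q_adj (F k).
Proof.
apply/matrixP => i j; rewrite q_adjE !summxE rmorph_sum; apply: eq_bigr => k _.
by rewrite q_adjE.
Qed.

Lemma q_adj1 (R : realType) n : q_adj (1%:M : 'M[R[i]]_n) = 1%:M.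
Proof. by apply/matrixP => i j; rewrite !mxE conjc_nat eq_sym. Qed.

Lemma q_unitaryC (R : realType) n (U : 'M[R[i]]_n) : q_unitary U -> U *m q_adj U = 1%:M.
Proof. by move=> hU; apply: mulmx1C. Qed.

Lemma q_unitaryN (R : realType) n (U : 'M[R[i]]_n) : q_unitary U -> q_unitary (- U).
Proof. by rewrite /q_unitary q_adjN mulNmx mulmxN opprK. Qed.

Lemma q_unitaryM (R : realType) n (U V : 'M[R[i]]_n) : q_unitary U -> q_unitary V -> q_unitary (U *m V).
Proof.
rewrite /q_unitary q_adj_mul => hU hV.
by rewrite mulmxA -(mulmxA _ _ U) hU mulmx1 hV.
Qed.

Lemma q_unitary_adj (R : realType) n (U : 'M[R[i]]_n) : q_unitary U -> q_unitary (q_adj U).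
Proof. by move=> hU; rewrite /q_unitary q_adjK q_unitaryC. Qed.

Lemma Re_normsq_ge0 (R : realType) n (y : 'M[R[i]]_(n,1)) : 0 <= complex.Re ((q_adj y *m y) 0 0).
Proof.
rewrite !mxE raddf_sum /=; apply: sumr_ge0 => k _; rewrite !mxE.
case: (y k 0) => a b /=; rewrite mulNr opprK -!expr2.
by apply: addr_ge0; apply: sqr_ge0.
Qed.

Lemma Re_conj_entry (R : realType) (A : 'M[R[i]]_1) : complex.Re (q_adj A 0 0) = complex.Re (A 0 0).
Proof. by rewrite mxE; case: (A 0 0). Qed.

Lemma Re_conjc (R : realType) (z : R[i]) : complex.Re (z^*) = complex.Re z.
Proof. by case: z. Qed.

Lemma unitary_Re_le (R : realType) n (Q : 'M[R[i]]_n) (x : 'M[R[i]]_(n,1)) :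
  q_unitary Q -> complex.Re ((q_adj x *m Q *m x) 0 0) <= complex.Re ((q_adj x *m x) 0 0).
Proof.
move=> hQ; have := Re_normsq_ge0 (x - Q *m x).
rewrite q_adjB q_adj_mul mulmxBl !mulmxBr -!mulmxA (mulmxA (q_adj Q)) hQ mul1mx.
have -> : q_adj x *m (q_adj Q *m x) = q_adj (q_adj x *m (Q *m x)).
  by rewrite !q_adj_mul q_adjK mulmxA.
rewrite !mxE !raddfB /= Re_conjc; lra.
Qed.

Lemma q_adj_delta (R : realType) n (i : 'I_n) :
  q_adj (delta_mx i 0 : 'M[R[i]]_(n,1)) = delta_mx 0 i.
Proof. by apply/matrixP => a b; rewrite !mxE conjc_nat andbC. Qed.

Lemma diag_entry_Re_le (R : realType) n (Q : 'M[R[i]]_n) i :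
  q_unitary Q -> complex.Re (Q i i) <= 1.
Proof.
move=> hQ; have := unitary_Re_le (delta_mx i 0) hQ.
rewrite q_adj_delta -rowE -colE !mxE (bigD1 i) //= big1 ?addr0.
  by rewrite !mxE !eqxx /= mulr1 mulr0 subr0.
by move=> k /negbTE hk; rewrite !mxE hk /= mul0r.
Qed.

Lemma svd_tr (R : realType) n (s : 'I_n -> R) (U V W : 'M[R[i]]_n) :
  \tr (W *m (U *m diag_mx (\row_i (s i)%:C) *m q_adj V)) =
  \sum_i (q_adj V *m W *m U) i i * (s i)%:C.
Proof.
rewrite !mulmxA mxtrace_mulC !mulmxA mul_mx_diag /mxtrace.
by apply: eq_bigr => i _; rewrite !mxE.
Qed.

Lemma trnorm_ge0 (R : realType) n (A : 'M[R[i]]_n) : 0 <= q_trnorm A.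
Proof.
rewrite /q_trnorm; case: boolp.pselect => // h.
case: (boolp.cid h) => s [hs _] /=; exact: sumr_ge0.
Qed.

Lemma trnorm_le_tr (R : realType) n (A W : 'M[R[i]]_n) :
  (exists s, q_singular_values A s) -> q_unitary W ->
  complex.Re (\tr (W *m A)) <= q_trnorm A.
Proof.
move=> h0 hW; rewrite /q_trnorm; case: boolp.pselect => // h.
case: (boolp.cid h) => s [hs [U [V [hU [hV hA]]]]] /=.
have -> : \tr (W *m A) = \sum_i (q_adj V *m W *m U) i i * (s i)%:C by rewrite hA svd_tr.
rewrite raddf_sum /=; apply: ler_sum => i _.
have hQ : q_unitary (q_adj V *m W *m U).
  by apply: q_unitaryM => //; apply: q_unitaryM => //; apply: q_unitary_adj.
have := diag_entry_Re_le i hQ.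
case: ((q_adj V *m W *m U) i i) => a b /=; rewrite mulr0 subr0 => ha.
by rewrite -[leRHS]mul1r ler_wpM2r.
Qed.

Lemma trnorm_le (R : realType) n (A : 'M[R[i]]_n) c :
  0 <= c -> (forall W, q_unitary W -> complex.Re (\tr (W *m A)) <= c) ->
  q_trnorm A <= c.
Proof.
move=> hc hW; rewrite /q_trnorm; case: boolp.pselect => // h.
case: (boolp.cid h) => s [hs [U [V [hU [hV hA]]]]] /=.
have hWu : q_unitary (V *m q_adj U).
  by apply: q_unitaryM => //; apply: q_unitary_adj.
have := hW _ hWu; rewrite [in X in X -> _]hA svd_tr.
rewrite mulmxA hV mul1mx hU raddf_sum /=.
suff -> : (\sum_(i < n) complex.Re ((1%:M : 'M[R[i]]_n) i i * (s i)%:C)) = \sum_i s i by [].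
by apply: eq_bigr => i _; rewrite !mxE eqxx /= mul1r mul0r subr0.
Qed.

Lemma q_adj_tC (R : realType) m n (A : 'M[R[i]]_(m,n)) : q_adj A = (A ^t* )%sesqui.
Proof. by apply/matrixP => i j; rewrite !mxE. Qed.

Lemma q_adj_diag (R : realType) n (d : 'rV[R[i]]_n) :
  q_adj (diag_mx d) = diag_mx (\row_i (d 0 i)^*).
Proof.
apply/matrixP => i j; rewrite !mxE eq_sym; case: eqP => [->|_] //=.
by rewrite mulr0n oppr0.
Qed.

Lemma conj_eq_real (R : realType) (z : R[i]) : z^* = z -> z = (complex.Re z)%:C.
Proof. by case: z => a b [] /= hb; congr (_ +i* _); lra. Qed.

Lemma q_spectral (R : realType) n (Y : 'M[R[i]]_n) : q_hermitian Y ->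
  exists (P : 'M[R[i]]_n) (d : 'I_n -> R),
    q_unitary P /\ Y = q_adj P *m diag_mx (\row_i (d i)%:C) *m P.
Proof.
move=> hY.
have hN : Y \is normalmx by apply/normalmxP; rewrite -q_adj_tC hY.
have /orthomx_spectralP := hN.
set P := spectralmx Y; set sp := spectral_diag Y => hYe.
have hPu : P \is unitarymx := spectral_unitarymx Y.
have hPP : P *m q_adj P = 1%:M by rewrite q_adj_tC; apply/unitarymxP.
have hPP' : q_adj P *m P = 1%:M by apply: mulmx1C.
rewrite invmx_unitary // -q_adj_tC in hYe.
have hD : P *m Y *m q_adj P = diag_mx sp.
  by rewrite hYe !mulmxA hPP mul1mx -mulmxA hPP mulmx1.
have hD' : q_adj (diag_mx sp) = diag_mx sp.
  by rewrite -hD !q_adj_mul q_adjK hY mulmxA.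
exists P, (fun i => complex.Re (sp 0 i)); split => //.
rewrite [LHS]hYe; congr (_ *m diag_mx _ *m _); apply/rowP => i; rewrite mxE.
apply: conj_eq_real.
have /matrixP /(_ i i) := hD'; rewrite q_adj_diag !mxE eqxx /= !mulr1n.
by [].
Qed.

Lemma svd_of_herm (R : realType) n (Y : 'M[R[i]]_n) : q_hermitian Y ->
  exists s, q_singular_values Y s.
Proof.
move=> /q_spectral [P [d [hP hY]]].
pose sg i : R := if 0 <= d i then 1 else -1.
exists (fun i => `|d i|); split.
  by move=> i; exact: normr_ge0.
exists (q_adj P), (q_adj P *m diag_mx (\row_i (sg i)%:C)); split.
  by apply: q_unitary_adj.
split.
  rewrite /q_unitary q_adj_mul q_adjK q_adj_diag mulmxA -(mulmxA _ P) (q_unitaryC hP).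
  rewrite mulmx1 mulmx_diag; apply/matrixP => i j; rewrite !mxE.
  case: eqP => [->|] //=; rewrite ?mulr1n ?mulr0n //.
  by rewrite /sg; case: ifP => _ /=; simpc.
rewrite hY q_adj_mul q_adjK q_adj_diag !mulmxA.
rewrite -[in RHS](mulmxA (q_adj P) (diag_mx _) (diag_mx _)) mulmx_diag.
congr (_ *m diag_mx _ *m _); apply/rowP => i; rewrite !mxE /sg.
case: ifP => h /=.
  by rewrite ger0_norm //; simpc.
by rewrite ltr0_norm ?ltNge ?h //; simpc.
Qed.

Lemma sum_tens (V : nmodType) m n (F : 'I_(m * n) -> V) :
  \sum_k F k = \sum_(i < m) \sum_(j < n) F (mxtens_index (i, j)).
Proof.
rewrite pair_big /= (reindex (@mxtens_index m n)) /=.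
  by apply: eq_bigr => -[i j].
by exists (@mxtens_unindex m n) => k _; [apply: mxtens_indexK | apply: mxtens_unindexK].
Qed.

Lemma ptrB_sum (R : realType) dS dB (I : finType) (P : pred I) (F : I -> 'M[R[i]]_(dS * dB)) :
  q_ptrB (\sum_(j | P j) F j) = \sum_(j | P j) q_ptrB (F j).
Proof.
apply/matrixP => a c; rewrite !mxE summxE.
under eq_bigr do rewrite summxE.
rewrite exchange_big /=; apply: eq_bigr => j _; by rewrite mxE.
Qed.

Lemma ptrB_Z (R : realType) dS dB z (A : 'M[R[i]]_(dS * dB)) :
  q_ptrB (z *: A) = z *: q_ptrB A.
Proof.
apply/matrixP => a c; rewrite !mxE mulr_sumr; apply: eq_bigr => b _.
by rewrite !mxE.
Qed.

Lemma ptrB_B (R : realType) dS dB (A B : 'M[R[i]]_(dS * dB)) :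
  q_ptrB (A - B) = q_ptrB A - q_ptrB B.
Proof.
apply/matrixP => a c; rewrite !mxE -sumrB; apply: eq_bigr => b _.
by rewrite !mxE.
Qed.

Lemma tr_sum (R : pzRingType) n (I : finType) (P : pred I) (F : I -> 'M[R]_n) :
  \tr (\sum_(j | P j) F j) = \sum_(j | P j) \tr (F j).
Proof.
rewrite /mxtrace; under eq_bigr do rewrite summxE.
by rewrite exchange_big.
Qed.

Lemma tr_B (R : pzRingType) n (A B : 'M[R]_n) : \tr (A - B) = \tr A - \tr B.
Proof. by rewrite /mxtrace -sumrB; apply: eq_bigr => i _; rewrite !mxE. Qed.

Definition gW (R : realType) dS dB (W : 'M[R[i]]_dS) (Z : 'M[R[i]]_(dS * dB)) : R :=
  complex.Re (\tr (W *m q_ptrB Z)).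

Lemma gW_lin (R : realType) dS dB (W : 'M[R[i]]_dS) (I : finType) (P : pred I)
  (r : I -> R) (Z : I -> 'M[R[i]]_(dS * dB)) :
  gW W (\sum_(j | P j) (r j)%:C *: Z j) = \sum_(j | P j) r j * gW W (Z j).
Proof.
rewrite /gW ptrB_sum mulmx_sumr tr_sum raddf_sum /=; apply: eq_bigr => j _.
rewrite ptrB_Z -scalemxAr mxtraceZ.
by case: (\tr _) => a b /=; rewrite mul0r subr0.
Qed.

Lemma gW_B (R : realType) dS dB (W : 'M[R[i]]_dS) (A B : 'M[R[i]]_(dS * dB)) :
  gW W (A - B) = gW W A - gW W B.
Proof. by rewrite /gW ptrB_B mulmxBr tr_B raddfB. Qed.

Lemma gW_ketbra (R : realType) dS dB (W : 'M[R[i]]_dS) (x : 'cV[R[i]]_(dS * dB)) :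
  q_unitary W -> (q_adj x *m x) 0 0 = 1 -> gW W (q_ketbra x x) <= 1.
Proof.
move=> hW hx.
pose y (b : 'I_dB) : 'cV[R[i]]_dS := \col_i x (mxtens_index (i, b)) 0.
have e1 : \tr (W *m q_ptrB (q_ketbra x x)) = \sum_b (q_adj (y b) *m W *m y b) 0 0.
  rewrite /mxtrace.
  transitivity (\sum_i \sum_k \sum_b W i k * (x (mxtens_index (k,b)) 0 * (x (mxtens_index (i,b)) 0)^* )).
    apply: eq_bigr => i _; rewrite mxE; apply: eq_bigr => k _.
    rewrite !mxE big_distrr /=; apply: eq_bigr => b _; rewrite !mxE big_ord1 !mxE //.
  transitivity (\sum_b \sum_k \sum_i W i k * (x (mxtens_index (k,b)) 0 * (x (mxtens_index (i,b)) 0)^* )).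
    under eq_bigr do rewrite exchange_big /=.
    rewrite exchange_big /=.
    by under eq_bigr do rewrite exchange_big /=.
  apply: eq_bigr => b _; rewrite mxE; apply: eq_bigr => k _.
  rewrite !mxE big_distrl; apply: eq_bigr => i _; rewrite !mxE /=; ring.
have e2 : (q_adj x *m x) 0 0 = \sum_b (q_adj (y b) *m y b) 0 0.
  rewrite mxE sum_tens exchange_big /=; apply: eq_bigr => b _.
  by rewrite mxE; apply: eq_bigr => i _; rewrite !mxE.
rewrite /gW e1 raddf_sum /=.
apply: (@le_trans _ _ (\sum_b complex.Re ((q_adj (y b) *m y b) 0 0))).
  by apply: ler_sum => b _; apply: unitary_Re_le.
by rewrite -raddf_sum /= -e2 hx.
Qed.

Lemma ptrB_adj (R : realType) dS dB (A : 'M[R[i]]_(dS * dB)) :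
  q_adj (q_ptrB A) = q_ptrB (q_adj A).
Proof.
apply/matrixP => a c; rewrite !mxE rmorph_sum; apply: eq_bigr => b _.
by rewrite !mxE.
Qed.

Lemma herm_ketbra (R : realType) n (x : 'cV[R[i]]_n) : q_hermitian (q_ketbra x x).
Proof. by rewrite /q_hermitian /q_ketbra q_adj_mul q_adjK. Qed.

Lemma inv_nat_C (R : realType) k : (k%:R : R[i])^-1 = ((k%:R : R)^-1)%:C.
Proof. by rewrite fmorphV rmorph_nat. Qed.

Lemma herm_rho_mc (R : realType) n (v : 'I_n -> 'cV[R[i]]_n) M : q_hermitian (q_rho_mc v M).
Proof.
rewrite /q_hermitian /q_rho_mc q_adjZ q_adj_sum inv_nat_C.
congr (_ *: _); first by rewrite /= ?oppr0; apply/eqP; rewrite eq_complex /= oppr0 !eqxx.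
by apply: eq_bigr => j _; apply: herm_ketbra.
Qed.

Lemma DS_bound (R : realType) dS dB (W : 'M[R[i]]_dS) (A B : 'M[R[i]]_(dS * dB)) :
  q_hermitian A -> q_hermitian B -> q_unitary W ->
  gW W A - gW W B <= 2 * q_DS A B.
Proof.
move=> hA hB hW; rewrite /q_DS mulrA mulfV ?pnatr_eq0 // mul1r -gW_B /gW ptrB_B.
apply: trnorm_le_tr => //; apply: svd_of_herm.
by rewrite /q_hermitian q_adjB !ptrB_adj hA hB.
Qed.

Lemma basis_complete (R : realType) n (v : 'I_n -> 'cV[R[i]]_n) :
  q_orthonormal_basis v -> \sum_j q_ketbra (v j) (v j) = 1%:M.
Proof.
move=> hv; pose V : 'M[R[i]]_n := \matrix_(k, j) v j k 0.
have hV : q_adj V *m V = 1%:M.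
  apply/matrixP => a b; rewrite [RHS]mxE -hv /q_braket mulmx1 !mxE; apply: eq_bigr => k _.
  by rewrite !mxE.
have := mulmx1C hV => hV'.
apply/matrixP => a b; rewrite -hV' summxE !mxE; apply: eq_bigr => j _.
by rewrite !mxE big_ord1 !mxE.
Qed.

Lemma tr_ketbra_mul (R : realType) n (x : 'cV[R[i]]_n) (A : 'M[R[i]]_n) :
  \tr (q_ketbra x x *m A) = q_braket x A x.
Proof.
by rewrite /q_ketbra /q_braket -mulmxA mxtrace_mulC /mxtrace big_ord1.
Qed.

Lemma gW_neg (R : realType) dS dB (W : 'M[R[i]]_dS) (Z : 'M[R[i]]_(dS * dB)) :
  gW (- W) Z = - gW W Z.
Proof. by rewrite /gW mulNmx -scaleN1r mxtraceZ mulN1r raddfN. Qed.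

Lemma gW_rho_mc (R : realType) dS dB (W : 'M[R[i]]_dS) (v : 'I_(dS * dB) -> 'cV[R[i]]_(dS * dB)) M :
  gW W (q_rho_mc v M) = (#|M|%:R)^-1 * \sum_(k in M) gW W (q_ketbra (v k) (v k)).
Proof.
rewrite /q_rho_mc inv_nat_C scaler_sumr gW_lin mulr_sumr //.
Qed.

Lemma amgm_aux (R : realType) (a r : R) : 0 < a -> r <= a / 2 * r ^+ 2 + (2 * a)^-1.
Proof.
move=> ha.
have -> : a / 2 * r ^+ 2 + (2 * a)^-1 = r + (2 * a)^-1 * (a * r - 1) ^+ 2.
  by field; rewrite gt_eqF.
rewrite lerDl; apply: mulr_ge0; last exact: sqr_ge0.
by rewrite invr_ge0 mulr_ge0 // ltW.
Qed.

Lemma main_N (R : realType) dS dB (v : 'I_(dS * dB) -> 'cV[R[i]]_(dS * dB))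
  (rho : 'M[R[i]]_(dS * dB)) (M : {set 'I_(dS * dB)}) (delta e : R) :
  q_orthonormal_basis v -> (forall j, 0 <= q_braket (v j) rho (v j)) -> \tr rho = 1 ->
  M != finset.set0 -> 0 < delta -> 0 < e ->
  complex.Re (\tr (q_P_out v M *m rho)) < delta ->
  (#|M|%:R)^-1 * #|[set j in M | q_DS (q_ketbra (v j) (v j)) (q_rho_mc v M) > delta]|%:R < e ->
  q_Deff v rho > #|M|%:R * e / delta ^+ 2 ->
  q_DS (q_diag_ens v rho) (q_rho_mc v M) <= 3 * delta.
Proof.
move=> hv hpsd htr hM hd he hout hB hD.
pose r j := complex.Re (q_braket (v j) rho (v j)).
have hp j : q_braket (v j) rho (v j) = (r j)%:C.
  have := hpsd j; rewrite /r; case: (q_braket _ _ _) => a b.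
  by rewrite lecE /= => /andP [/eqP -> _].
have hr0 j : 0 <= r j.
  by have := hpsd j; rewrite lecE => /andP [_]; rewrite /r.
have hsum : \sum_j r j = 1.
  have : \tr (rho) = \sum_j (r j)%:C.
    rewrite -[rho]mul1mx -(basis_complete hv) mulmx_suml tr_sum.
    by apply: eq_bigr => j _; rewrite tr_ketbra_mul hp.
  by rewrite htr -rmorph_sum => -[->].
have hsout : \sum_(j in ~: M) r j = complex.Re (\tr (q_P_out v M *m rho)).
  rewrite /q_P_out mulmx_suml tr_sum raddf_sum; apply: eq_bigr => j _.
  by rewrite tr_ketbra_mul.
set B := [set j in M | _] in hB.
have hMpos : (0 < #|M|%:R :> R).
  by rewrite ltr0n card_gt0.
set D := q_Deff v rho in hD.
set S2 := \sum_j r j ^+ 2.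
have hD0 : 0 < D.
  apply: lt_trans hD; apply: divr_gt0; first exact: mulr_gt0.
  exact: exprn_gt0.
have hDS : D * S2 = 1.
  have hDe : D = S2^-1 by [].
  rewrite hDe mulVf //; apply/eqP => h0; move: hD0; rewrite hDe h0 invr0 ltxx.
  by [].
have hBD : #|B|%:R < delta ^+ 2 * D.
  have h1 : #|B|%:R < #|M|%:R * e.
    by move: hB; rewrite ltr_pdivrMl.
  apply: lt_trans h1 _.
  by move: hD; rewrite ltr_pdivrMr ?exprn_gt0 // [delta ^+ 2 * D]mulrC.
have hsB : \sum_(j in B) r j < delta.
  pose a := D * delta.
  have ha : 0 < a by apply: mulr_gt0.
  apply: (@le_lt_trans _ _ (\sum_(j in B) (a / 2 * r j ^+ 2 + (2 * a)^-1))).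
    by apply: ler_sum => j _; apply: amgm_aux.
  rewrite big_split /= sumr_const -mulr_sumr.
  have h1 : \sum_(j in B) r j ^+ 2 <= S2.
    rewrite [S2](bigID (mem B)) /= lerDl; apply: sumr_ge0 => j _; exact: sqr_ge0.
  have h2 : a / 2 * \sum_(j in B) r j ^+ 2 <= delta / 2.
    apply: (@le_trans _ _ (a / 2 * S2)).
      by apply: ler_wpM2l => //; rewrite divr_ge0 // ltW.
    have -> : a / 2 * S2 = (D * S2) * (delta / 2) by rewrite /a; ring.
    by rewrite hDS mul1r.
  have h3 : (2 * a)^-1 *+ #|B| < delta / 2.
    rewrite -[_ *+ #|B|]mulr_natr mulrC ltr_pdivrMr ?mulr_gt0 //.
    have -> : delta / 2 * (2 * a) = delta ^+ 2 * D by rewrite /a; field.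
    exact: hBD.
  rewrite [X in _ < X]splitr; exact: ler_ltD h2 h3.
have hunit j : (q_adj (v j) *m v j) 0 0 = 1.
  by have := hv j j; rewrite /q_braket mulmx1 eqxx.
have hX : q_trnorm (q_ptrB (q_diag_ens v rho) - q_ptrB (q_rho_mc v M)) <= 6 * delta.
  apply: trnorm_le; first by rewrite mulr_ge0 // ltW.
  move=> W hW.
  have -> : complex.Re (\tr (W *m (q_ptrB (q_diag_ens v rho) - q_ptrB (q_rho_mc v M))))
      = gW W (q_diag_ens v rho) - gW W (q_rho_mc v M) by rewrite /gW mulmxBr tr_B raddfB.
  have hom : q_diag_ens v rho = \sum_j (r j)%:C *: q_ketbra (v j) (v j).
    by apply: eq_bigr => j _; rewrite hp.
  rewrite hom gW_lin.
  set c := gW W (q_rho_mc v M).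
  have -> : c = \sum_j r j * c by rewrite -mulr_suml hsum mul1r.
  rewrite -sumrB.
  have hc : - c <= 1.
    rewrite /c -gW_neg gW_rho_mc.
    apply: (@le_trans _ _ ((#|M|%:R)^-1 * \sum_(k in M) 1)).
      apply: ler_wpM2l; first by rewrite invr_ge0 ltW.
      by apply: ler_sum => k _; apply: gW_ketbra => //; apply: q_unitaryN.
    by rewrite sumr_const mulVf // gt_eqF.
  have hpt j : r j * gW W (q_ketbra (v j) (v j)) - r j * c <=
      2 * delta * r j + (if j \in ~: M then 2 * r j else 0) + (if j \in B then 2 * r j else 0).
    rewrite -mulrBr.
    have hg := gW_ketbra hW (hunit j).
    have ht2 : r j * (gW W (q_ketbra (v j) (v j)) - c) <= 2 * r j.
      rewrite mulrC; apply: ler_wpM2r => //; lra.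
    case hjB : (j \in B).
      apply: le_trans ht2 _; rewrite -{1}[2 * r j]add0r lerD2r; apply: addr_ge0.
        by rewrite !mulr_ge0 // ltW.
      by case: ifP => _ //; rewrite mulr_ge0.
    case hjM : (j \in ~: M).
      apply: le_trans ht2 _; rewrite addr0 -{1}[2 * r j]add0r lerD2r.
      by rewrite !mulr_ge0 // ltW.
    rewrite !addr0.
    have hjM' : j \in M by move: hjM; rewrite finset.in_setC => /negbFE.
    have hDSj : q_DS (q_ketbra (v j) (v j)) (q_rho_mc v M) <= delta.
      by move: hjB; rewrite /B inE hjM' /= => /negbT; rewrite -leNgt.
    have := DS_bound (herm_ketbra (v j)) (herm_rho_mc v M) hW.
    rewrite -/c => h; rewrite mulrC; apply: ler_wpM2r => //; lra.
  apply: (@le_trans _ _ (\sum_j (2 * delta * r j + (if j \in ~: M then 2 * r j else 0)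
       + (if j \in B then 2 * r j else 0)))).
    by apply: ler_sum => j _; apply: hpt.
  rewrite !big_split /= -!big_mkcond /= -!mulr_sumr hsum hsout mulr1.
  have := hsB; lra.
rewrite /q_DS; lra.
Qed.

Lemma tr_tens (R : realType) m n (A : 'M[R[i]]_m) (B : 'M[R[i]]_n) :
  \tr (A *t B) = \tr A * \tr B.
Proof.
rewrite /mxtrace sum_tens big_distrl; apply: eq_bigr => i _ /=.
by rewrite big_distrr; apply: eq_bigr => b _; rewrite tensmxE.
Qed.

Lemma braketDl (R : realType) n (x y z : 'cV[R[i]]_n) A :
  q_braket (x + y) A z = q_braket x A z + q_braket y A z.
Proof. by rewrite /q_braket q_adjD !mulmxDl mxE. Qed.

Lemma braketDr (R : realType) n (x y z : 'cV[R[i]]_n) A :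
  q_braket z A (x + y) = q_braket z A x + q_braket z A y.
Proof. by rewrite /q_braket mulmxDr mxE. Qed.

Lemma braketZl (R : realType) n c (x z : 'cV[R[i]]_n) A :
  q_braket (c *: x) A z = c^* * q_braket x A z.
Proof. by rewrite /q_braket q_adjZ -!scalemxAl mxE. Qed.

Lemma braketZr (R : realType) n c (x z : 'cV[R[i]]_n) A :
  q_braket z A (c *: x) = c * q_braket z A x.
Proof. by rewrite /q_braket -!scalemxAr mxE. Qed.

Lemma braket_delta (R : realType) n (A : 'M[R[i]]_n) i k :
  q_braket (delta_mx i 0) A (delta_mx k 0) = A i k.
Proof. by rewrite /q_braket q_adj_delta -rowE -colE !mxE. Qed.

Lemma psd_herm (R : realType) n (A : 'M[R[i]]_n) : q_psd A -> q_hermitian A.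
Proof.
move=> hA; apply/matrixP => i k; rewrite q_adjE.
have h0 x : complex.Im (q_braket x A x) = 0 := ger0_Im (hA x).
have h1 := h0 (delta_mx i 0 + delta_mx k 0).
have h2 := h0 (delta_mx i 0 + 'i *: delta_mx k 0).
have hii := h0 (delta_mx i 0); have hkk := h0 (delta_mx k 0).
rewrite !(braketDl, braketDr, braketZl, braketZr, braket_delta) in h1 h2 hii hkk.
move: h1 h2 hii hkk.
case: (A i i) => a1 a2; case: (A i k) => b1 b2; case: (A k i) => c1 c2;
  case: (A k k) => d1 d2 /= h1 h2 hii hkk.
apply/eqP; rewrite eq_complex /=; apply/andP; split; apply/eqP; lra.
Qed.

Lemma braket_tens (R : realType) dS dB (A : 'M[R[i]]_dS) (B : 'M[R[i]]_dB)
  (x : 'cV[R[i]]_(dS * dB)) :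
  let X : 'M[R[i]]_(dS, dB) := \matrix_(i, b) x (mxtens_index (i, b)) 0 in
  q_braket x (A *t B) x = \tr (q_adj X *m A *m X *m B^T).
Proof.
move=> X; rewrite /q_braket mxE.
under eq_bigr do rewrite mxE big_distrl.
rewrite sum_tens.
under eq_bigr do under eq_bigr do rewrite sum_tens.
under eq_bigr do under eq_bigr do rewrite exchange_big.
rewrite /mxtrace.
under [RHS]eq_bigr => b _ do rewrite mxE.
under [RHS]eq_bigr => b _ do under eq_bigr => c _ do rewrite mxE big_distrl.
under [RHS]eq_bigr => b _ do under eq_bigr => c _ do under eq_bigr => j _ do rewrite mxE !big_distrl.
under [RHS]eq_bigr => b _ do rewrite exchange_big.
rewrite [RHS]exchange_big.
under [RHS]eq_bigr => b _ do rewrite exchange_big.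
apply: eq_bigr => j _; apply: eq_bigr => c _; apply: eq_bigr => b _; apply: eq_bigr => i _.
rewrite tensmxE !mxE /=; ring.
Qed.


Lemma q_adj_tr (R : realType) m n (A : 'M[R[i]]_(m,n)) : q_adj (A^T) = (q_adj A)^T.
Proof. by apply/matrixP => i j; rewrite !mxE. Qed.

Lemma entry_braket (R : realType) m n (Y : 'M[R[i]]_(m,n)) (A : 'M[R[i]]_m) k :
  (q_adj Y *m A *m Y) k k = q_braket (Y *m delta_mx k 0) A (Y *m delta_mx k 0).
Proof.
by rewrite /q_braket q_adj_mul q_adj_delta !mulmxA -rowE -!row_mul -colE !mxE.
Qed.

Lemma psd_tens (R : realType) m n (A : 'M[R[i]]_m) (B : 'M[R[i]]_n) :
  q_psd A -> q_psd B -> q_psd (A *t B).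
Proof.
move=> hA hB x; rewrite braket_tens; set X := \matrix_(i, b) _.
have [P [d [hP hBe]]] := q_spectral (psd_herm hB).
have hd k : 0 <= (d k)%:C.
  have := hB (q_adj P *m delta_mx k 0).
  rewrite /q_braket q_adj_mul q_adjK q_adj_delta hBe !mulmxA.
  rewrite -!(mulmxA _ P (q_adj P)) (q_unitaryC hP) !mulmx1.
  by rewrite -rowE -colE !mxE eqxx mulr1n.
rewrite hBe !trmx_mul tr_diag_mx.
set D := diag_mx _.
have -> : \tr (q_adj X *m A *m X *m (P^T *m (D *m (q_adj P)^T))) =
    \tr (q_adj (X *m P^T) *m A *m (X *m P^T) *m D).
  by rewrite q_adj_mul q_adj_tr !mulmxA mxtrace_mulC !mulmxA.
rewrite /D mul_mx_diag /mxtrace; apply: sumr_ge0 => k _.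
rewrite mxE [(\row_i _) 0 k]mxE; apply: mulr_ge0 => //.
by rewrite entry_braket; apply: hA.
Qed.

Theorem lemma2 (R : realType) (dS : nat) (dB : nat -> nat)
  (H : forall N, 'M[R[i]]_(dS * dB N))
  (E : forall N, 'I_(dS * dB N) -> R)
  (v : forall N, 'I_(dS * dB N) -> 'cV[R[i]]_(dS * dB N))
  (rhoS : forall N : nat, 'M[R[i]]_dS) (rhoB : forall N, 'M[R[i]]_(dB N))
  (u : R) (Delta : nat -> R) (alpha : R) (gamma : R -> R) :
  (* Hamiltonian: Hermitian, orthonormal eigenbasis, non-degenerate spectrum *)
  (forall N, q_hermitian (H N)) ->
  (forall N, q_orthonormal_basis (v N)) ->
  (forall N j, H N *m v N j = (E N j)%:C *: v N j) ->
  (forall N, injective (E N)) ->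
  (* product initial state of q_density operators *)
  (forall N, q_density (rhoS N)) ->
  (forall N, q_density (rhoB N)) ->
  (* widths Delta_N > 0 with Delta_N = O(N^alpha), 0 <= alpha < 1 *)
  (forall N, 0 < Delta N) ->
  0 <= alpha < 1 ->
  (exists c : R, exists N0 : nat, forall N, (N0 <= N)%N ->
      Delta N <= c * (N%:R `^ alpha)) ->
  (* nonempty energy shells *)
  (forall N, q_shell (E N) (u * N%:R) (Delta N) != finset.set0) ->
  (* (i) *)
  (forall eps : R, 0 < eps -> exists N0 : nat, forall N, (N0 <= N)%N ->
      complex.Re (\tr (q_P_out (v N) (q_shell (E N) (u * N%:R) (Delta N))
                        *m (tensmx (rhoS N) (rhoB N)))) < eps) ->
  (* (ii) weak ETH, with rate gamma eps *)
  (forall eps : R, 0 < eps -> 0 < gamma eps /\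
    forall N,
      let M := q_shell (E N) (u * N%:R) (Delta N) in
      (#|M|%:R)^-1 *
        #|[set j in M | q_DS (q_ketbra (v N j) (v N j)) (q_rho_mc (v N) M) > eps]|%:R
      < expR (- (gamma eps * N%:R))) ->
  (* (iii) large effective dimension *)
  (forall eps epst : R, 0 < eps -> 0 < epst -> exists N0 : nat,
    forall N, (N0 <= N)%N ->
      let M := q_shell (E N) (u * N%:R) (Delta N) in
      q_Deff (v N) (tensmx (rhoS N) (rhoB N)) > #|M|%:R * expR (- (gamma eps * N%:R)) / epst) ->
  (* conclusion *)
  forall eps : R, 0 < eps -> exists N0 : nat, forall N, (N0 <= N)%N ->
    q_DS (q_diag_ens (v N) (tensmx (rhoS N) (rhoB N)))
       (q_rho_mc (v N) (q_shell (E N) (u * N%:R) (Delta N))) < eps.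
Proof.
move=> hH hv hE hinj hS hB hD hal hDO hne hi hii hiii eps heps.
pose d := eps / 4.
have hd : 0 < d by rewrite divr_gt0.
have [_ hETH] := hii d hd.
have [N1 hN1] := hi d hd.
have [N2 hN2] := hiii d (d ^+ 2) hd (exprn_gt0 2 hd).
exists (maxn N1 N2) => N hN.
have h1 : (N1 <= N)%N by apply: leq_trans hN; apply: leq_maxl.
have h2 : (N2 <= N)%N by apply: leq_trans hN; apply: leq_maxr.
apply: (le_lt_trans (main_N (hv N) (fun j => psd_tens (hS N).1 (hB N).1 (v N j)) _
   (hne N) hd (expR_gt0 _) (hN1 N h1) (hETH N) (hN2 N h2))).
  by rewrite tr_tens (hS N).2 (hB N).2 mulr1.
rewrite /d; lra.
Qed.
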